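(* Let an FTTC mechanism satisfy bounded advantage. Then for every FEE problem, the output assignment $p$ satisfies bounded envy: for all $i,j\in I$, $$\max_{o\in O}\Big[\sum_{o'\succsim_i o}p_{j,o'}-\sum_{o'\succsim_i o}p_{i,o'}\Big]\le\sum_{o\in O:\,\omega_{j,o}>\omega_{i,o}}(\omega_{j,o}-\omega_{i,o}).$$
   Context: Fractional endowment exchange (FEE) problem: a tuple $(I,O,\succsim_I,\omega)$ where $I$ is a finite set of agents, $O$ a finite set of objects, each agent $i$ has a complete and transitive (possibly non-strict) preference relation $\succsim_i$ over $O$ with asymmetric part $\succ_i$ and symmetric part $\sim_i$, and $\omega=(\omega_{i,o})_{i\in I,o\in O}$ is an endowment matrix with $\omega_{i,o}\in[0,1]$, $\sum_{o\in O}\omega_{i,o}\le 1$ for each $i$, and $q_o=\sum_{i\in I}\omega_{i,o}$ an integer for each $o$. An assignment is a nonnegative matrix $p=(p_{i,o})$ with $\sum_i p_{i,o}\le q_o$ for all $o$ and $\sum_o p_{i,o}\le 1$ for all $i$; $p_i=(p_{i,o})_{o\in O}$ is $i$'s lottery. FTTC (Fractional Top Trading Cycle) on the full preference domain. Initialize $\omega(0)=\omega$, $p(0)=0$, $O(0)=O$. At step $d\ge1$ (with $O(d-1)\ne\emptyset$): (i) Labeling. Put $T_0=O(d-1)$. For $k=1,2,\dots$: let $L_k$ be the set of agents $i\notin L_1\cup\dots\cup L_{k-1}$ for which there exist $o\in T_{k-1}$ and $o'\in O\setminus(T_0\cup\dots\cup T_{k-1})$ with $p_{i,o'}(d-1)>0$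 and $o\sim_i o'$; for $i\in L_k$ let $\tilde O_i(d-1)$ be the set of all such $o'$ for this $i$, and let $T_k=\bigcup_{i\in L_k}\tilde O_i(d-1)$. Stop at the first $k$ with $L_k=\emptyset$. Set $L(d-1)=\bigcup_k L_k$, $\tilde O(d-1)=\bigcup_{k\ge1}T_k$, $\overline{O}(d-1)=O(d-1)\cup\tilde O(d-1)$, and $\tilde O_i(d-1)=\emptyset$ for $i\notin L(d-1)$. (ii) Pointing. The active agents are $I(d-1)=L(d-1)\cup\{i\in I:\sum_o\omega_{i,o}(d-1)>0\}$. For $i\in I(d-1)$ let $B_i$ be the set of $\succsim_i$-maximal elements of $\overline{O}(d-1)$, let $k_i$ be the least $k\ge0$ with $B_i\cap T_k\ne\emptyset$, and let $A_i(d)=B_i\cap T_{k_i}$. (iii) Trading. The mechanism chooses (possibly depending on the history): a ratio matrix $\lambda(d)=(\lambda_{i,o}(d))_{i\in I(d-1),o\in\overline{O}(d-1)}$, nonnegative, with $\sum_{i\in I(d-1)}\lambda_{i,o}(d)=1$ for each $o\in\overline O(d-1)$, $\lambda_{i,o}(d)>0$ only if $\omega_{i,o}(d-1)>0$ (for $o\in O(d-1)$) and only if $o\in\tilde O_i(d-1)$ (for $o\in\tilde O(d-1)$); a quota matrix $\beta(d)$ on $I(d-1)\times O(d-1)$ with $0\le\beta_{i,o}(d)\le\omega_{i,o}(d-1)$; a division matrix $\gamma(d)$ on $I(d-1)\times\overline O(d-1)$, nonnegative, with $\sum_o\gamma_{i,o}(d)=1$ and $\gamma_{i,o}(d)>0$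 only if $o\in A_i(d)$. Let $x^*(d)=(x^*_a(d))_{a\in I(d-1)\cup\overline O(d-1)}$ be the maximum (componentwise largest) nonnegative solution of $x_o=\sum_{i\in I(d-1)}\gamma_{i,o}(d)x_i$ for all $o\in\overline O(d-1)$ and $x_i=\sum_{o\in\overline O(d-1)}\lambda_{i,o}(d)x_o$ for all $i\in I(d-1)$, subject to $\lambda_{i,o}(d)x_o\le\beta_{i,o}(d)$ for $o\in O(d-1)$ and $\lambda_{i,o}(d)x_o\le p_{i,o}(d-1)$ for $o\in\tilde O(d-1)$. For $i\in I(d-1)$: $\omega_{i,o}(d)=\omega_{i,o}(d-1)-\lambda_{i,o}(d)x^*_o(d)$ if $o\in O(d-1)$ and $0$ otherwise; $p_{i,o}(d)=p_{i,o}(d-1)-\mathbf 1[o\in\tilde O_i(d-1)]\lambda_{i,o}(d)x^*_o(d)+\gamma_{i,o}(d)x^*_i(d)$ (with $\gamma_{i,o}(d)=0$ for $o\notin\overline O(d-1)$). For $i\notin I(d-1)$, $\omega_i(d)=\omega_i(d-1)$, $p_i(d)=p_i(d-1)$. Let $O(d)=\{o\in O(d-1):\sum_i\omega_{i,o}(d)>0\}$. If $O(d)=\emptyset$ stop and output $p(d)$; otherwise go to step $d+1$. (Standing assumption: the maximum solution exists at each step and the procedure ends after finitely many steps.) An FTTC mechanism is specified by a rule choosing $\lambda(d),\beta(d),\gamma(d)$ at every step. Bounded advantage: at every step $d$, for all $i,j\in I(d-1)$ and all $o\in O(d-1)$, if $\omega_{i,o}(d-1)\ge\omega_{j,o}(d-1)$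 then $\lambda_{i,o}(d)\ge\lambda_{j,o}(d)$ and $\omega_{i,o}(d)\ge\omega_{j,o}(d)$. *)

(* Defs.v *)
From mathcomp Require Import all_boot all_order all_algebra.
Set Implicit Arguments. Unset Strict Implicit. Unset Printing Implicit Defensive.
Import Order.TTheory GRing.Theory Num.Theory.
Local Open Scope ring_scope.

(* pref i o o'  means  o ≿_i o'  (weak preference of agent i). *)
Definition indiff (I O : finType) (pref : I -> rel O) (i : I) (o o' : O) : bool :=
  pref i o o' && pref i o' o.

Definition fee_problem (R : numDomainType) (I O : finType)
  (pref : I -> rel O) (om0 : I -> O -> R) : Prop :=
  [/\ forall i, total (pref i) /\ transitive (pref i),
      forall i o, 0 <= om0 i o <= 1,
      forall i, \sum_(o : O) om0 i o <= 1
    & forall o, exists n : nat, \sum_(i : I) om0 i o = n%:R].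

(* L_k from T_{k-1}, Tall = T_0 ∪ ... ∪ T_{k-1}, Lall = L_1 ∪ ... ∪ L_{k-1} *)
Definition newL (R : numDomainType) (I O : finType) (pref : I -> rel O)
  (p : I -> O -> R) (Tk Tall : {set O}) (Lall : {set I}) : {set I} :=
  [set i | (i \notin Lall) &&
     [exists o in Tk, exists o' : O,
        [&& o' \notin Tall, 0 < p i o' & indiff pref i o o']]].

Definition tOset (R : numDomainType) (I O : finType) (pref : I -> rel O)
  (p : I -> O -> R) (Tk Tall : {set O}) (i : I) : {set O} :=
  [set o' | [&& o' \notin Tall, 0 < p i o' & [exists o in Tk, indiff pref i o o']]].

(* lab k = (T_k, L_k, T_0 ∪ ... ∪ T_k, L_1 ∪ ... ∪ L_k), with T_0 = Ocur, L_0 = ∅ *)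
Fixpoint lab (R : numDomainType) (I O : finType) (pref : I -> rel O)
  (p : I -> O -> R) (Ocur : {set O}) (k : nat)
  : {set O} * {set I} * {set O} * {set I} :=
  match k with
  | 0 => (Ocur, set0, Ocur, set0)
  | k'.+1 =>
      let: (Tk, _, Tall, Lall) := lab pref p Ocur k' in
      let L := newL pref p Tk Tall Lall in
      let Tn := \bigcup_(i in L) tOset pref p Tk Tall i in
      (Tn, L, Tall :|: Tn, Lall :|: L)
  end.

Definition Tlab (R : numDomainType) (I O : finType) (pref : I -> rel O) (p : I -> O -> R) (Ocur : {set O}) (k : nat) : {set O} :=
  (@lab R I O pref p Ocur k).1.1.1.
Definition Llab (R : numDomainType) (I O : finType) (pref : I -> rel O) (p : I -> O -> R) (Ocur : {set O}) (k : nat) : {set I} :=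
  (@lab R I O pref p Ocur k).1.1.2.
Definition Tcum (R : numDomainType) (I O : finType) (pref : I -> rel O) (p : I -> O -> R) (Ocur : {set O}) (k : nat) : {set O} :=
  (@lab R I O pref p Ocur k).1.2.
Definition Lcum (R : numDomainType) (I O : finType) (pref : I -> rel O) (p : I -> O -> R) (Ocur : {set O}) (k : nat) : {set I} :=
  (@lab R I O pref p Ocur k).2.

(* The L_k are pairwise disjoint, so the labeling stops after at most #|I|+1
   rounds; the cumulative sets at round #|I|+1 are the final ones. *)
Definition Lset (R : numDomainType) (I O : finType) pref p Ocur : {set I} :=
  @Lcum R I O pref p Ocur #|I|.+1.
Definition Obar (R : numDomainType) (I O : finType) pref p Ocur : {set O} :=
  @Tcum R I O pref p Ocur #|I|.+1.
Definition Otilde (R : numDomainType) (I O : finType) pref p Ocur : {set O} :=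
  @Obar R I O pref p Ocur :\: Ocur.
Definition Otilde_i (R : numDomainType) (I O : finType) pref p Ocur (i : I) : {set O} :=
  \bigcup_(k < #|I|.+1)
     (if i \in @Llab R I O pref p Ocur k.+1
      then tOset pref p (@Tlab R I O pref p Ocur k) (@Tcum R I O pref p Ocur k) i
      else set0).

Definition Iact (R : numDomainType) (I O : finType) pref (om p : I -> O -> R) Ocur : {set I} :=
  @Lset R I O pref p Ocur :|: [set i | 0 < \sum_(o : O) om i o].

Definition Bmax (R : numDomainType) (I O : finType) pref p Ocur (i : I) : {set O} :=
  [set o in @Obar R I O pref p Ocur |
     [forall o' : O, (o' \in @Obar R I O pref p Ocur) ==> pref i o o']].

(* A_i(d) = B_i ∩ T_{k_i}, k_i least with B_i ∩ T_k ≠ ∅ (T_k = ∅ for k > #|I|+1) *)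
Definition Aset (R : numDomainType) (I O : finType) pref p Ocur (i : I) : {set O} :=
  [set o in @Bmax R I O pref p Ocur i |
     [exists k : 'I_(#|I|.+2),
        (o \in @Tlab R I O pref p Ocur k) &&
        [forall k' : 'I_(#|I|.+2), (k' < k)%N ==>
           [disjoint @Bmax R I O pref p Ocur i & @Tlab R I O pref p Ocur k']]]].

Definition feasible (R : numDomainType) (I O : finType) pref (om p : I -> O -> R) (Ocur : {set O})
  (lam beta gam : I -> O -> R) (xI : I -> R) (xO : O -> R) : Prop :=
  let Ia := @Iact R I O pref om p Ocur in
  let Ob := @Obar R I O pref p Ocur in
  let Ot := @Otilde R I O pref p Ocur in
  (forall i, i \in Ia -> 0 <= xI i) /\
  (forall o, o \in Ob -> 0 <= xO o) /\
  (forall o, o \in Ob -> xO o = \sum_(i in Ia) gam i o * xI i) /\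
  (forall i, i \in Ia -> xI i = \sum_(o in Ob) lam i o * xO o) /\
  (forall i o, i \in Ia -> o \in Ocur -> lam i o * xO o <= beta i o) /\
  (forall i o, i \in Ia -> o \in Ot -> lam i o * xO o <= p i o).

(* One step d of FTTC: from (om, p, Ocur) = (ω(d-1), p(d-1), O(d-1)) with the
   chosen (λ(d), β(d), γ(d)) and the maximum solution x*(d), producing
   (om', p', Onext) = (ω(d), p(d), O(d)). *)
Definition fttc_step (R : numDomainType) (I O : finType) pref (om p : I -> O -> R) (Ocur : {set O})
  (lam beta gam : I -> O -> R) (xI : I -> R) (xO : O -> R)
  (om' p' : I -> O -> R) (Onext : {set O}) : Prop :=
  let Ia := @Iact R I O pref om p Ocur in
  let Ob := @Obar R I O pref p Ocur in
  let Ot := @Otilde R I O pref p Ocur in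
      (forall i o, i \in Ia -> o \in Ob -> 0 <= lam i o) /\
      (forall o, o \in Ob -> \sum_(i in Ia) lam i o = 1) /\
      (forall i o, i \in Ia -> o \in Ocur -> 0 < lam i o -> 0 < om i o) /\
      (forall i o, i \in Ia -> o \in Ot -> 0 < lam i o ->
                   o \in @Otilde_i R I O pref p Ocur i) /\
      (forall i o, i \in Ia -> o \in Ocur -> 0 <= beta i o <= om i o) /\
      (forall i o, i \in Ia -> o \in Ob -> 0 <= gam i o) /\
      (forall i, i \in Ia -> \sum_(o in Ob) gam i o = 1) /\
      (forall i o, i \in Ia -> o \in Ob -> 0 < gam i o ->
                   o \in @Aset R I O pref p Ocur i) /\
      (feasible pref om p Ocur lam beta gam xI xO /\
       forall yI yO, feasible pref om p Ocur lam beta gam yI yO ->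
         (forall i, i \in Ia -> yI i <= xI i) /\
         (forall o, o \in Ob -> yO o <= xO o)) /\
      (forall i o, om' i o =
         if i \in Ia then (if o \in Ocur then om i o - lam i o * xO o else 0)
         else om i o) /\
      (forall i o, p' i o =
         if i \in Ia then
           p i o
           - (if o \in @Otilde_i R I O pref p Ocur i then lam i o * xO o else 0)
           + (if o \in Ob then gam i o * xI i else 0)
         else p i o) /\
      Onext = [set o in Ocur | 0 < \sum_(i : I) om' i o].

(* A complete (terminating) run of an FTTC mechanism on the problem
   (pref, om0), ending at step D; the mechanism's choices at step d are
   lam d, beta d, gam d (they may depend arbitrarily on the history). *)
Definition fttc_run (R : numDomainType) (I O : finType) pref (om0 : I -> O -> R) (D : nat)
  (om p : nat -> I -> O -> R) (Os : nat -> {set O})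
  (lam beta gam : nat -> I -> O -> R) (xI : nat -> I -> R) (xO : nat -> O -> R)
  : Prop :=
  [/\ forall i o, om 0%N i o = om0 i o,
      forall i o, p 0%N i o = 0,
      Os 0%N = setT,
      Os D = set0
    & forall d, (0 < d <= D)%N ->
        Os d.-1 != set0 /\
        fttc_step pref (om d.-1) (p d.-1) (Os d.-1) (lam d) (beta d) (gam d)
                  (xI d) (xO d) (om d) (p d) (Os d)].

Definition bounded_advantage (R : numDomainType) (I O : finType) pref (D : nat)
  (om p : nat -> I -> O -> R) (Os : nat -> {set O}) (lam : nat -> I -> O -> R)
  : Prop :=
  forall d, (0 < d <= D)%N ->
  forall i j o,
    i \in @Iact R I O pref (om d.-1) (p d.-1) (Os d.-1) ->
    j \in @Iact R I O pref (om d.-1) (p d.-1) (Os d.-1) ->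
    o \in Os d.-1 ->
    om d.-1 j o <= om d.-1 i o ->
    lam d j o <= lam d i o /\ om d j o <= om d i o.

(* Bounded envy of an assignment q with respect to the endowment om0
   (the max over o is expressed as: the bound holds for every o). *)
Definition bounded_envy (R : numDomainType) (I O : finType) (pref : I -> rel O)
  (om0 q : I -> O -> R) : Prop :=
  forall i j (o : O),
    \sum_(o' | pref i o' o) q j o' - \sum_(o' | pref i o' o) q i o'
      <= \sum_(o1 | om0 i o1 < om0 j o1) (om0 j o1 - om0 i o1).

(* Main.v *)
Require Import Defs.
From mathcomp Require Import all_boot all_order all_algebra.
From mathcomp Require Import zify ring lra.
Set Implicit Arguments. Unset Strict Implicit. Unset Printing Implicit Defensive.
Import Order.TTheory GRing.Theory Num.Theory.
Local Open Scope ring_scope.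

Lemma labS (R : numDomainType) (I O : finType) (pref : I -> rel O) (p : I -> O -> R) Oc k :
  [/\ Llab pref p Oc k.+1 = newL pref p (Tlab pref p Oc k) (Tcum pref p Oc k) (Lcum pref p Oc k),
      Tlab pref p Oc k.+1 = \bigcup_(i in Llab pref p Oc k.+1) tOset pref p (Tlab pref p Oc k) (Tcum pref p Oc k) i,
      Tcum pref p Oc k.+1 = Tcum pref p Oc k :|: Tlab pref p Oc k.+1
    & Lcum pref p Oc k.+1 = Lcum pref p Oc k :|: Llab pref p Oc k.+1].
Proof.
rewrite /Llab /Tlab /Tcum /Lcum /=.
by case: (lab pref p Oc k) => [[[a b] c] d].
Qed.

Lemma lab0 (R : numDomainType) (I O : finType) (pref : I -> rel O) (p : I -> O -> R) Oc :
  [/\ Tlab pref p Oc 0 = Oc, Tcum pref p Oc 0 = Oc & Lcum pref p Oc 0 = set0].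
Proof. by []. Qed.

Section Lab.
Variables (R : numDomainType) (I O : finType) (pref : I -> rel O) (p : I -> O -> R) (Oc : {set O}).
Local Notation Tl := (Tlab pref p Oc).
Local Notation Tc := (Tcum pref p Oc).
Local Notation Ll := (Llab pref p Oc).
Local Notation Lc := (Lcum pref p Oc).

Lemma Tcum_mono m n : (m <= n)%N -> Tc m \subset Tc n.
Proof.
move=> /subnK <-; elim: (n - m)%N => [|k IH] //=.
rewrite addSn; case: (labS pref p Oc (k + m)) => _ _ -> _.
exact: subset_trans IH (subsetUl _ _).
Qed.

Lemma Tlab_sub k : Tl k \subset Tc k.
Proof. case: k => [|k] //; by case: (labS pref p Oc k) => _ _ -> _; apply: subsetUr. Qed.

Lemma Lcum_mono m n : (m <= n)%N -> Lc m \subset Lc n.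
Proof.
move=> /subnK <-; elim: (n - m)%N => [|k IH] //=.
rewrite addSn; case: (labS pref p Oc (k + m)) => _ _ _ ->.
exact: subset_trans IH (subsetUl _ _).
Qed.

Lemma mem_Tcum k z : z \in Tc k -> exists2 r, (r <= k)%N & z \in Tl r.
Proof.
elim: k => [|k IH]; first by exists 0%N.
case: (labS pref p Oc k) => _ _ -> _; rewrite inE => /orP[/IH [r Hr Hz]|Hz].
  by exists r => //; apply: leqW.
by exists k.+1.
Qed.

Lemma mem_Lcum k a : a \in Lc k -> exists2 s, (s < k)%N & a \in Ll s.+1.
Proof.
elim: k => [|k IH]; first by rewrite /Lcum /= inE.
case: (labS pref p Oc k) => _ _ _ ->; rewrite inE => /orP[/IH [r Hr Hz]|Hz].
  by exists r => //; apply: ltnW.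
by exists k.
Qed.

Lemma card_Lcum k : Tl k != set0 -> (k <= #|Lc k|)%N.
Proof.
elim: k => [|k IH] //.
case: (labS pref p Oc k) => HL HT _ HLc.
rewrite HT => /set0Pn [z /bigcupP [a Ha Hz]].
have Tk : Tl k != set0.
  move: Hz; rewrite /tOset inE => /and3P [_ _ /existsP [o /andP [Ho _]]].
  by apply/set0Pn; exists o.
have Hdis : [disjoint Lc k & Ll k.+1].
  rewrite -setI_eq0; apply/eqP/setP => b; rewrite !inE HL /newL inE.
  by case: (b \in Lc k).
rewrite HLc cardsU (disjoint_setI0 Hdis) cards0 subn0.
have : (0 < #|Ll k.+1|)%N by apply/card_gt0P; exists a.
move: (IH Tk); lia.
Qed.

Lemma Tlab_last : Tl #|I|.+1 = set0.
Proof.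
apply/eqP; apply/negPn/negP => /card_Lcum.
by rewrite ltnNge max_card.
Qed.


Lemma indiffC a x y : indiff pref a x y = indiff pref a y x.
Proof. by rewrite /indiff andbC. Qed.

Lemma noH (a : I) o' z :
  transitive (pref a) ->
  (forall o1 z1, 0 < p a o1 -> z1 \in Obar pref p Oc -> pref a o1 z1) ->
  0 < p a o' -> o' \notin Obar pref p Oc -> z \in Obar pref p Oc ->
  ~~ indiff pref a o' z.
Proof.
move=> Htr M po' no' zO; apply/negP => Hind.
have TcO k : (k <= #|I|.+1)%N -> Tc k \subset Obar pref p Oc by move=> Hk; apply: Tcum_mono.
have TlO k : (k <= #|I|.+1)%N -> Tl k \subset Obar pref p Oc.
  by move=> Hk; apply: subset_trans (Tlab_sub k) (TcO k Hk).
case: (boolP (a \in Lc #|I|.+1)) => Ha.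
- case: (mem_Lcum Ha) => s Hs Has.
  case: (labS pref p Oc s) => HL HT _ _.
  have := Has; rewrite HL /newL inE => /andP [_ /existsP [o /andP [Hos /existsP [o'' /and3P [Hn Hp Hi]]]]].
  have oO : o \in Obar pref p Oc by apply: (subsetP (TlO s (ltnW Hs))).
  have o''O : o'' \in Obar pref p Oc.
    apply: (subsetP (TlO s.+1 Hs)); rewrite HT; apply/bigcupP; exists a => //.
    rewrite /tOset inE Hp Hn /=; by apply/existsP; exists o; rewrite Hos.
  have Hi2 : indiff pref a o o'.
    move: Hind Hi; rewrite /indiff => /andP [h1 h2] /andP [h3 h4].
    rewrite (M _ _ po' oO) andbT.
    apply: (Htr o'') h3 _; apply: (Htr z) (M _ _ Hp zO) h2.
  have no2 := no'.
  move/negP: no'; apply; apply: (subsetP (TlO s.+1 Hs)); rewrite HT; apply/bigcupP; exists a => //.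
  rewrite /tOset inE po' /=; apply/andP; split.
    by apply: contra no2; apply: (subsetP (TcO s (ltnW Hs))).
  by apply/existsP; exists o; rewrite Hos Hi2.
- case: (mem_Tcum zO) => r; rewrite leq_eqVlt => /orP [/eqP -> | Hr] Hz.
    by rewrite Tlab_last inE in Hz.
  have Ha2 := Ha.
  move/negP: Ha; apply; apply: (subsetP (Lcum_mono Hr)).
  case: (labS pref p Oc r) => HL _ _ ->; rewrite inE HL /newL inE; apply/orP; right.
  apply/andP; split.
    by apply: contra Ha2; apply: (subsetP (Lcum_mono (ltnW Hr))).
  apply/existsP; exists z; rewrite Hz /=; apply/existsP; exists o'; rewrite po' indiffC Hind andbT /=.
  rewrite andbT; apply: contra no'; apply: (subsetP (TcO r (ltnW Hr))).
Qed.
End Lab.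

Lemma Obar_mono (R : numDomainType) (I O : finType) (pref : I -> rel O) (p p' : I -> O -> R)
    (Oc Oc' : {set O}) :
  Oc' \subset Oc ->
  (forall a o', 0 < p' a o' -> o' \notin Obar pref p Oc -> 0 < p a o') ->
  (forall a o' z, 0 < p a o' -> o' \notin Obar pref p Oc -> z \in Obar pref p Oc ->
       ~~ indiff pref a o' z) ->
  Obar pref p' Oc' \subset Obar pref p Oc.
Proof.
move=> sO Hp H.
have Tk k : Tlab pref p' Oc' k \subset Obar pref p Oc.
  elim: k => [|k IH].
    apply: subset_trans sO _; apply: (@Tcum_mono _ _ _ pref p Oc 0).
    done.
  case: (labS pref p' Oc' k) => _ -> _ _.
  apply/subsetP => o' /bigcupP [a _].
  rewrite /tOset inE => /and3P [_ Hpo /existsP [o /andP [Ho Hi]]].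
  apply/negPn/negP => no'.
  have := H a o' o (Hp _ _ Hpo no') no' (subsetP IH _ Ho).
  by rewrite indiffC Hi.
apply/subsetP => z /mem_Tcum [r _ Hz]; exact: (subsetP (Tk r)).
Qed.


Lemma Oti_sub (R : numDomainType) (I O : finType) (pref : I -> rel O) (p : I -> O -> R) (Oc : {set O}) a :
  Otilde_i pref p Oc a \subset Otilde pref p Oc.
Proof.
apply/subsetP => o /bigcupP [k _]; case: ifP => Hk; last by rewrite inE.
move=> Ho; rewrite /Otilde inE; apply/andP; split.
  move: Ho; rewrite /tOset inE => /and3P [Hn _ _].
  by apply: contra Hn; apply: (subsetP (@Tcum_mono _ _ _ pref p Oc 0 k _)).
apply: (subsetP (@Tcum_mono _ _ _ pref p Oc k.+1 _ (ltn_ord k))).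
case: (labS pref p Oc k) => _ _ -> _; rewrite inE; apply/orP; right.
case: (labS pref p Oc k) => _ -> _ _; apply/bigcupP; exists a => //.
Qed.

Lemma Oc_sub_Obar (R : numDomainType) (I O : finType) (pref : I -> rel O) (p : I -> O -> R) (Oc : {set O}) :
  Oc \subset Obar pref p Oc.
Proof. exact: (@Tcum_mono _ _ _ pref p Oc 0). Qed.

Lemma Aset_sub (R : numDomainType) (I O : finType) (pref : I -> rel O) (p : I -> O -> R) (Oc : {set O}) a o :
  o \in Aset pref p Oc a -> forall z, z \in Obar pref p Oc -> pref a o z.
Proof.
rewrite /Aset /Bmax !inE => /andP [/andP [_ /forallP H] _] z Hz.
by move: (H z); rewrite Hz.
Qed.

Section Step.
Variables (R : realFieldType) (I O : finType) (pref : I -> rel O).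
Variables (om p : I -> O -> R) (Oc : {set O}) (lam beta gam : I -> O -> R)
  (xI : I -> R) (xO : O -> R) (om' p' : I -> O -> R) (Oc' : {set O}).
Hypothesis Hstep : fttc_step pref om p Oc lam beta gam xI xO om' p' Oc'.
Hypothesis Htr : forall a, transitive (pref a).
Hypothesis om_ge0 : forall k o, 0 <= om k o.
Hypothesis p_ge0 : forall k o, 0 <= p k o.
Hypothesis om_out : forall k o, o \notin Oc -> om k o = 0.
Hypothesis HM : forall a o1 z, 0 < p a o1 -> z \in Obar pref p Oc -> pref a o1 z.

Local Notation Ia := (Iact pref om p Oc).
Local Notation Ob := (Obar pref p Oc).
Local Notation Ot := (Otilde pref p Oc).
Local Notation Oti := (Otilde_i pref p Oc).

Lemma lam_ge0 k o : k \in Ia -> o \in Ob -> 0 <= lam k o.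
Proof. by case: Hstep => [H _]; apply: H. Qed.
Lemma lam_Oti k o : k \in Ia -> o \in Ot -> 0 < lam k o -> o \in Oti k.
Proof. by case: Hstep => _ [_ [_ [H _]]]; apply: H. Qed.
Lemma beta_le k o : k \in Ia -> o \in Oc -> 0 <= beta k o <= om k o.
Proof. by case: Hstep => _ [_ [_ [_ [H _]]]]; apply: H. Qed.
Lemma gam_ge0 k o : k \in Ia -> o \in Ob -> 0 <= gam k o.
Proof. by case: Hstep => _ [_ [_ [_ [_ [H _]]]]]; apply: H. Qed.
Lemma gam_sum k : k \in Ia -> \sum_(o in Ob) gam k o = 1.
Proof. by case: Hstep => _ [_ [_ [_ [_ [_ [H _]]]]]]; apply: H. Qed.
Lemma gam_A k o : k \in Ia -> o \in Ob -> 0 < gam k o -> o \in Aset pref p Oc k.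
Proof. by case: Hstep => _ [_ [_ [_ [_ [_ [_ [H _]]]]]]]; apply: H. Qed.
Lemma feas : feasible pref om p Oc lam beta gam xI xO.
Proof. by case: Hstep => _ [_ [_ [_ [_ [_ [_ [_ [[H _] _]]]]]]]]. Qed.
Lemma xI_ge0 k : k \in Ia -> 0 <= xI k.
Proof. by case: feas => [H _]; apply: H. Qed.
Lemma xO_ge0 o : o \in Ob -> 0 <= xO o.
Proof. by case: feas => _ [H _]; apply: H. Qed.
Lemma xI_eq k : k \in Ia -> xI k = \sum_(o in Ob) lam k o * xO o.
Proof. by case: feas => _ [_ [_ [H _]]]; apply: H. Qed.
Lemma capB k o : k \in Ia -> o \in Oc -> lam k o * xO o <= beta k o.
Proof. by case: feas => _ [_ [_ [_ [H _]]]]; apply: H. Qed.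
Lemma capP k o : k \in Ia -> o \in Ot -> lam k o * xO o <= p k o.
Proof. by case: feas => _ [_ [_ [_ [_ H]]]]; apply: H. Qed.
Lemma om'E k o : om' k o =
  if k \in Ia then (if o \in Oc then om k o - lam k o * xO o else 0) else om k o.
Proof. by case: Hstep => _ [_ [_ [_ [_ [_ [_ [_ [_ [H _]]]]]]]]]; apply: H. Qed.
Lemma p'E k o : p' k o =
  if k \in Ia then
    p k o - (if o \in Oti k then lam k o * xO o else 0)
    + (if o \in Ob then gam k o * xI k else 0)
  else p k o.
Proof. by case: Hstep => _ [_ [_ [_ [_ [_ [_ [_ [_ [_ [H _]]]]]]]]]]; apply: H. Qed.
Lemma Oc'E : Oc' = [set o in Oc | 0 < \sum_(k : I) om' k o].
Proof. by case: Hstep => _ [_ [_ [_ [_ [_ [_ [_ [_ [_ [_ H]]]]]]]]]]. Qed.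

Lemma OtiOb k o : o \in Oti k -> o \in Ob.
Proof. by move/(subsetP (Oti_sub _ _ _ _)); rewrite inE => /andP[]. Qed.

Lemma om'_ge0 k o : 0 <= om' k o.
Proof.
rewrite om'E; case: ifP => Hk //; case: ifP => Ho //.
have := capB Hk Ho; have := beta_le Hk Ho; lra.
Qed.

Lemma lamx_ge0 k o : k \in Ia -> o \in Ob -> 0 <= lam k o * xO o.
Proof. by move=> Hk Ho; apply: mulr_ge0; [apply: lam_ge0|apply: xO_ge0]. Qed.

Lemma p'_ge0 k o : 0 <= p' k o.
Proof.
rewrite p'E; case: ifP => Hk //.
apply: addr_ge0.
  case: ifP => Ho; last by rewrite subr0.
  rewrite subr_ge0; apply: (capP Hk); exact: (subsetP (Oti_sub pref p Oc k)).
case: ifP => Ho //; apply: mulr_ge0; [exact: gam_ge0|exact: xI_ge0].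
Qed.

Lemma inact_om k o : k \notin Ia -> om k o = 0.
Proof.
rewrite /Iact !inE negb_or => /andP [_ H].
have : \sum_(o0 : O) om k o0 <= 0 by rewrite leNgt.
move=> Hs; apply/eqP; rewrite eq_le om_ge0 andbT.
apply: le_trans Hs; rewrite (bigD1 o) //= lerDl; exact: sumr_ge0.
Qed.

Lemma om'_out k o : o \notin Oc' -> om' k o = 0.
Proof.
rewrite Oc'E inE negb_and => /orP [Ho|Hs].
  rewrite om'E (negbTE Ho); case: ifP => //; by rewrite om_out.
have : \sum_(k : I) om' k o == 0.
  by rewrite eq_le sumr_ge0 ?andbT //; [rewrite leNgt | move=> *; exact: om'_ge0].
by rewrite psumr_eq0 => [/allP /(_ k (mem_index_enum _)) /implyP /(_ isT) /eqP|k' _]; last exact: om'_ge0.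
Qed.

Lemma p'_out a o : o \notin Ob -> p' a o = p a o.
Proof.
move=> Ho; rewrite p'E (negbTE Ho); case: ifP => // _.
by case: ifP => [/OtiOb|]; [rewrite (negbTE Ho)|rewrite subr0 addr0].
Qed.

Lemma Obar'_sub : Obar pref p' Oc' \subset Ob.
Proof.
apply: Obar_mono.
- by rewrite Oc'E; apply/subsetP => o; rewrite inE => /andP[].
- by move=> a o' H Ho; rewrite -(p'_out a Ho).
- move=> a o' z H1 H2 H3; apply: (noH (@Htr a) _ H1 H2 H3) => o1 z1; exact: HM.
Qed.

Lemma M' a o1 z : 0 < p' a o1 -> z \in Obar pref p' Oc' -> pref a o1 z.
Proof.
move=> Hp /(subsetP Obar'_sub) Hz.
case: (ltrP 0 (p a o1)) => Hp0; first exact: HM.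
move: Hp; rewrite p'E; case: ifP => Hk; last by rewrite ltNge Hp0.
have : 0 <= (if o1 \in Oti a then lam a o1 * xO o1 else 0).
  by case: ifP => // H; apply: lamx_ge0 => //; exact: (OtiOb H).
move: (if o1 \in Oti a then _ else _) => t Ht.
case: (boolP (o1 \in Ob)) => Ho1; last by move=> Hx; exfalso; lra.
case: (ltrP 0 (gam a o1)) => Hg.
  by move=> _; apply: (Aset_sub (gam_A Hk Ho1 Hg)).
have Hg0 : gam a o1 = 0 by apply/eqP; rewrite eq_le Hg gam_ge0.
rewrite Hg0 mul0r addr0 => Hx; exfalso; lra.
Qed.

Definition Ek k := if k \in Ia then \sum_(o in Oc) lam k o * xO o else 0.

Lemma Ek_ge0 k : 0 <= Ek k.
Proof.
rewrite /Ek; case: ifP => Hk //; apply: sumr_ge0 => o Ho.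
by apply: lamx_ge0 => //; apply: (subsetP (Oc_sub_Obar _ _ _)).
Qed.

Lemma sum_Ob k : k \in Ia ->
  \sum_(o in Ob) lam k o * xO o =
  \sum_(o in Oc) lam k o * xO o + \sum_(o in Oti k) lam k o * xO o.
Proof.
move=> Hk; rewrite (big_setID Oc) /=.
have -> : Ob :&: Oc = Oc by apply/setIidPr; apply: Oc_sub_Obar.
congr (_ + _).
rewrite (big_setID (Oti k)) /=.
have -> : (Ob :\: Oc) :&: Oti k = Oti k.
  by apply/setIidPr; exact: (Oti_sub pref p Oc k).
rewrite [X in _ + X]big1 ?addr0 // => o; rewrite !inE => /andP [Hn /andP [Hc Ho]].
have := lam_ge0 Hk Ho; rewrite le_eqVlt => /orP [/eqP <-|Hl]; first by rewrite mul0r.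
have Ht : o \in Ot by rewrite /Otilde inE Hc.
by move: (lam_Oti Hk Ht Hl); rewrite (negbTE Hn).
Qed.

Lemma Tot_step k : \sum_o p' k o = \sum_o p k o + Ek k.
Proof.
rewrite /Ek; case: ifP => Hk; last first.
  by rewrite addr0; apply: eq_bigr => o _; rewrite p'E Hk.
have -> : \sum_o p' k o = \sum_o p k o - \sum_(o in Oti k) lam k o * xO o
            + \sum_(o in Ob) gam k o * xI k.
  under eq_bigr => o _ do rewrite p'E Hk.
  by rewrite big_split /= sumrB -!big_mkcond.
rewrite -mulr_suml gam_sum // mul1r xI_eq // sum_Ob //; lra.
Qed.

Variables (i : I) (o0 : O).

Lemma P_step_full u : u \in Ob -> pref i u o0 ->
  \sum_(o' | pref i o' o0) p i o' + Ek i <= \sum_(o' | pref i o' o0) p' i o'.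
Proof.
move=> Hu Hui; rewrite /Ek; case: ifP => Hk; last first.
  by rewrite addr0 le_eqVlt; apply/orP; left; apply/eqP; apply: eq_bigr => o _; rewrite p'E Hk.
have -> : \sum_(o in Oc) lam i o * xO o =
   \sum_o ((if o \in Ob then gam i o * xI i else 0) - (if o \in Oti i then lam i o * xO o else 0)).
  rewrite sumrB -!big_mkcond /= -mulr_suml gam_sum // mul1r xI_eq // sum_Ob //; lra.
rewrite [X in X + _]big_mkcond [X in _ <= X]big_mkcond -big_split /=.
apply: ler_sum => o _; rewrite p'E Hk.
case: ifP => Hpo; first by rewrite addrA addrAC.
have Hl : 0 <= (if o \in Oti i then lam i o * xO o else 0).
  by case: ifP => // H; apply: lamx_ge0 => //; exact: (OtiOb H).
have Hg : (if o \in Ob then gam i o * xI i else 0) = 0.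
  case: ifP => // Ho.
  case: (ltrP 0 (gam i o)) => Hg; last first.
    by rewrite (_ : gam i o = 0) ?mul0r //; apply/eqP; rewrite eq_le Hg gam_ge0.
  have := Aset_sub (gam_A Hk Ho Hg) Hu => Hou.
  by move: Hpo; rewrite (@Htr i u o o0 Hou Hui).
rewrite Hg add0r sub0r oppr_le0; exact: Hl.
Qed.

Lemma P_step_empty k : (forall u, u \in Ob -> ~~ pref i u o0) ->
  \sum_(o' | pref i o' o0) p' k o' = \sum_(o' | pref i o' o0) p k o'.
Proof.
move=> Hn; apply: eq_bigr => o' Ho'; apply: p'_out.
by apply/negP => /Hn; rewrite Ho'.
Qed.

Definition ek k o := if (k \in Ia) && (o \in Oc) then lam k o * xO o else 0.

Lemma sum_ek k : \sum_o ek k o = Ek k.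
Proof.
rewrite /Ek /ek; case: ifP => Hk /=; first by rewrite -big_mkcond.
by rewrite big1.
Qed.

Hypothesis BA : forall i j o, i \in Ia -> j \in Ia -> o \in Oc -> om j o <= om i o ->
  lam j o <= lam i o /\ om' j o <= om' i o.

Lemma Phi_term j o :
  Num.max 0 (om' j o - om' i o) <= Num.max 0 (om j o - om i o) + ek i o - ek j o.
Proof.
have M1 : 0 <= Num.max 0 (om j o - om i o) by rewrite le_max lexx.
have M2 : om j o - om i o <= Num.max 0 (om j o - om i o) by rewrite le_max lexx orbT.
have M3 : 0 <= om j o - om i o -> Num.max 0 (om j o - om i o) = om j o - om i o.
  by move=> h; apply: max_r.
move: M1 M2 M3; set m := Num.max 0 _ => M1 M2 M3.
have omi := om_ge0 i o; have omj := om_ge0 j o.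
have omi' := om'_ge0 i o; have omj' := om'_ge0 j o.
rewrite /ek ge_max.
case: (boolP (o \in Oc)) => Ho; last first.
  rewrite !andbF !subr0 !addr0 M1 /=.
  have Z k : om' k o = 0 by rewrite om'E (negbTE Ho) om_out //; case: ifP.
  by rewrite !Z subrr.
have x0 := xO_ge0 (subsetP (Oc_sub_Obar pref p Oc) _ Ho).
rewrite !andbT !om'E Ho.
rewrite !om'E Ho in omi' omj'.
case: (boolP (i \in Ia)) => Hi; case: (boolP (j \in Ia)) => Hj;
  rewrite ?Hi ?Hj in omi' omj' *.
- have Li := lam_ge0 Hi (subsetP (Oc_sub_Obar pref p Oc) _ Ho).
  have Lj := lam_ge0 Hj (subsetP (Oc_sub_Obar pref p Oc) _ Ho).
  case: (lerP (om j o) (om i o)) => Hji.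
    case: (BA Hi Hj Ho Hji); rewrite !om'E Hi Hj Ho => Hl Hom.
    have : 0 <= (lam i o - lam j o) * xO o by apply: mulr_ge0 => //; lra.
    move=> H; apply/andP; split; nra.
  case: (BA Hj Hi Ho (ltW Hji)); rewrite !om'E Hi Hj Ho => Hl Hom.
  rewrite M3; last lra.
  apply/andP; split; nra.
- have Li := lam_ge0 Hi (subsetP (Oc_sub_Obar pref p Oc) _ Ho).
  have Lx : 0 <= lam i o * xO o by apply: mulr_ge0.
  rewrite (inact_om o Hj) in M1 M2 M3 omj' *; apply/andP; split; lra.
- rewrite (inact_om o Hi) in M1 M2 M3 omi' *.
  have Lj := lam_ge0 Hj (subsetP (Oc_sub_Obar pref p Oc) _ Ho).
  rewrite M3; last lra.
  apply/andP; split; lra.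
- apply/andP; split; lra.
Qed.

Lemma Phi_step j :
  \sum_o Num.max 0 (om' j o - om' i o) <=
  \sum_o Num.max 0 (om j o - om i o) + Ek i - Ek j.
Proof.
rewrite -!sum_ek -big_split -sumrB /=.
apply: ler_sum => o _; have := Phi_term j o; lra.
Qed.

Lemma step_pot j u : u \in Ob -> pref i u o0 ->
  \sum_o p' j o - \sum_(o' | pref i o' o0) p' i o' + \sum_o Num.max 0 (om' j o - om' i o) <=
  \sum_o p j o - \sum_(o' | pref i o' o0) p i o' + \sum_o Num.max 0 (om j o - om i o).
Proof.
move=> Hu Hui; have h1 := Tot_step j; have h2 := P_step_full Hu Hui; have h3 := Phi_step j.
lra.
Qed.

End Step.

Lemma step_inv (R : realFieldType) (I O : finType) (pref : I -> rel O)
  (om p : I -> O -> R) (Oc : {set O}) (lam beta gam : I -> O -> R)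
  (xI : I -> R) (xO : O -> R) (om' p' : I -> O -> R) (Oc' : {set O}) :
  fttc_step pref om p Oc lam beta gam xI xO om' p' Oc' ->
  (forall a, transitive (pref a)) ->
  (forall k o, 0 <= om k o) -> (forall k o, 0 <= p k o) ->
  (forall k o, o \notin Oc -> om k o = 0) ->
  (forall a o1 z, 0 < p a o1 -> z \in Obar pref p Oc -> pref a o1 z) ->
  [/\ (forall k o, 0 <= om' k o), (forall k o, 0 <= p' k o),
      (forall k o, o \notin Oc' -> om' k o = 0),
      (forall a o1 z, 0 < p' a o1 -> z \in Obar pref p' Oc' -> pref a o1 z)
    & Obar pref p' Oc' \subset Obar pref p Oc].
Proof.
move=> Hs Ht H1 H2 H3 H4; split.
- exact: om'_ge0 Hs H1.
- exact: p'_ge0 Hs H2.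
- exact: om'_out Hs H1 H3.
- exact: M' Hs Ht H4.
- exact: Obar'_sub Hs Ht H4.
Qed.

Unset Implicit Arguments.

Theorem proposition2 (R : realFieldType) (I O : finType)
  (pref : I -> rel O) (om0 : I -> O -> R) (D : nat)
  (om p : nat -> I -> O -> R) (Os : nat -> {set O})
  (lam beta gam : nat -> I -> O -> R) (xI : nat -> I -> R) (xO : nat -> O -> R) :
  fee_problem pref om0 ->
  fttc_run pref om0 D om p Os lam beta gam xI xO ->
  bounded_advantage pref D om p Os lam ->
  bounded_envy pref om0 (p D).
Proof.
case=> Hpr Hom01 _ _ [Hom0 Hp0 HOs0 _ Hsteps] HBA.
have Htr : forall a, transitive (pref a) by move=> a; case: (Hpr a).
have Hst d : (d < D)%N -> fttc_step pref (om d) (p d) (Os d) (lam d.+1) (beta d.+1) (gam d.+1)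
                  (xI d.+1) (xO d.+1) (om d.+1) (p d.+1) (Os d.+1).
  by move=> Hd; case: (Hsteps d.+1) => //; rewrite ltn0Sn Hd.
pose INV d := [/\ (forall k o, 0 <= om d k o), (forall k o, 0 <= p d k o),
      (forall k o, o \notin Os d -> om d k o = 0)
    & (forall a o1 z, 0 < p d a o1 -> z \in Obar pref (p d) (Os d) -> pref a o1 z)].
have Hinv d : (d <= D)%N -> INV d.
  elim: d => [|d IH] Hd.
    split.
    - by move=> k o; rewrite Hom0; case/andP: (Hom01 k o).
    - by move=> k o; rewrite Hp0.
    - by move=> k o; rewrite HOs0 inE.
    - by move=> a o1 z; rewrite Hp0 ltxx.
  case: (IH (ltnW Hd)) => H1 H2 H3 H4.
  by case: (step_inv (Hst d Hd) Htr H1 H2 H3 H4).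
have Hmono d : (d < D)%N -> Obar pref (p d.+1) (Os d.+1) \subset Obar pref (p d) (Os d).
  move=> Hd; case: (Hinv d (ltnW Hd)) => H1 H2 H3 H4.
  by case: (step_inv (Hst d Hd) Htr H1 H2 H3 H4).
move=> i j o0.
pose RHS := \sum_(o1 | om0 i o1 < om0 j o1) (om0 j o1 - om0 i o1).
pose F d := \sum_(o' | pref i o' o0) p d j o' - \sum_(o' | pref i o' o0) p d i o'.
pose Psi d := \sum_o p d j o - \sum_(o' | pref i o' o0) p d i o'
              + \sum_o Num.max 0 (om d j o - om d i o).
have RHSE : RHS = \sum_o Num.max 0 (om 0 j o - om 0 i o).
  rewrite /RHS big_mkcond /=; apply: eq_bigr => o _; rewrite !Hom0.
  case: ifP => H.
    by rewrite max_r //; rewrite subr_ge0 ltW.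
  by rewrite max_l //; rewrite subr_le0 leNgt H.
have FPsi d : (d <= D)%N -> F d <= Psi d.
  move=> Hd; case: (Hinv d Hd) => H1 H2 H3 H4.
  have : 0 <= \sum_o Num.max 0 (om d j o - om d i o).
    by apply: sumr_ge0 => o _; rewrite le_max lexx.
  have : \sum_(o' | pref i o' o0) p d j o' <= \sum_o p d j o.
    rewrite [X in _ <= X](bigID (fun o' => pref i o' o0)) /= lerDl.
    by apply: sumr_ge0 => o _.
  rewrite /F /Psi; lra.
have C d : (d <= D)%N -> F d <= RHS /\
   ((exists2 u, u \in Obar pref (p d) (Os d) & pref i u o0) -> Psi d <= RHS).
  elim: d => [|d IH] Hd.
    have Psi0 : Psi 0%N = RHS.
      have Z1 : \sum_o p 0%N j o = 0 by apply: big1 => o _; rewrite Hp0.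
      have Z2 : \sum_(o' | pref i o' o0) p 0%N i o' = 0 by apply: big1 => o _; rewrite Hp0.
      by rewrite RHSE /Psi Z1 Z2 subrr add0r.
    have RHS0 : 0 <= RHS.
      by apply: sumr_ge0 => o Ho; rewrite subr_ge0 ltW.
    split; last by rewrite Psi0.
    by rewrite /F !big1 ?subrr // => o _; rewrite Hp0.
  case: (IH (ltnW Hd)) => IH1 IH2.
  case: (Hinv d (ltnW Hd)) => H1 H2 H3 H4.
  have Hs := Hst d Hd.
  case: (boolP [exists u, (u \in Obar pref (p d) (Os d)) && pref i u o0]) => Hex0.
    have Hex : exists2 u, u \in Obar pref (p d) (Os d) & pref i u o0.
      by case/existsP: Hex0 => u /andP [] ? ?; exists u.
    have HBAd : forall i j o, i \in Iact pref (om d) (p d) (Os d) -> j \in Iact pref (om d) (p d) (Os d) ->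
        o \in Os d -> om d j o <= om d i o -> lam d.+1 j o <= lam d.+1 i o /\ om d.+1 j o <= om d.+1 i o.
      by move=> i1 j1 o1; apply: (HBA d.+1).
    case: Hex => u Hu Hui.
    have := step_pot Hs Htr H1 H3 HBAd j Hu Hui.
    move=> Hpot; have HP : Psi d.+1 <= RHS.
      by apply: le_trans (IH2 (ex_intro2 _ _ u Hu Hui)); rewrite /Psi.
    split => //; exact: le_trans (FPsi _ Hd) HP.
  have Hex : ~ exists2 u, u \in Obar pref (p d) (Os d) & pref i u o0.
    by case=> u Hu Hui; move/negP: Hex0; apply; apply/existsP; exists u; rewrite Hu Hui.
  split.
    have E k : \sum_(o' | pref i o' o0) p d.+1 k o' = \sum_(o' | pref i o' o0) p d k o'.
      apply: (P_step_empty Hs) => v Hv; apply/negP => Hvi; apply: Hex; by exists v.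
    by rewrite /F !E.
  case=> v /(subsetP (Hmono d Hd)) Hv Hvi; exfalso; apply: Hex; by exists v.
case: (C D (leqnn D)) => HF _.
by move: HF; rewrite /F.
Qed.
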